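(* Let $d\ge1$, $N=2^d$, $Q\ge 1$, and let $\Omega=\{(x,y,m):0\le x\le 1,\ 0<m\le y\le Qm\}$. Say a function $B:\Omega\to\mathbb{R}$ satisfies the main inequality at level $m$ if \[ B(x,y,m)\ge \frac1N\sum_{i=1}^N B(x_i,y_i,m_i) \] whenever $(x,y,m)\in\Omega$, $(x_i,y_i,m_i)\in\Omega$ for $i=1,\dots,N$, $\frac1N\sum x_i=x$, $\frac1N\sum y_i=y$ and $\min_i m_i=m$. Suppose $B$ satisfies the main inequality at level $m=1$ and the homogeneity property $B(x,\lambda y,\lambda m)=\lambda B(x,y,m)$ for all $\lambda>0$ and $(x,y,m)\in\Omega$. Then $B$ satisfies the main inequality at every level $m>0$. *)

(* Defs.v *)
From Stdlib Require Import Reals Lra.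
Open Scope R_scope.

Definition InOmega (Q x y m : R) : Prop :=
  0 <= x <= 1 /\ 0 < m /\ m <= y /\ y <= Q * m.

(* Finite average of f 0, ..., f (N-1), for N >= 1. *)
Definition avg (N : nat) (f : nat -> R) : R :=
  (/ INR N) * sum_f_R0 f (N - 1).

Definition is_min_on (N : nat) (ms : nat -> R) (m : R) : Prop :=
  (forall i, (i < N)%nat -> m <= ms i) /\ (exists i, (i < N)%nat /\ ms i = m).

Definition main_ineq_at (d : nat) (Q : R) (B : R -> R -> R -> R) (m : R) : Prop :=
  let N := (2 ^ d)%nat in
  forall (x y : R) (xs ys ms : nat -> R),
    InOmega Q x y m ->
    (forall i, (i < N)%nat -> InOmega Q (xs i) (ys i) (ms i)) ->
    avg N xs = x ->
    avg N ys = y ->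
    is_min_on N ms m ->
    B x y m >= avg N (fun i => B (xs i) (ys i) (ms i)).

(* Main.v *)
Require Import Defs.
From Stdlib Require Import Reals Lra Lia.
Open Scope R_scope.

Lemma avg_scal N f c : avg N (fun i => f i * c) = avg N f * c.
Proof. unfold avg. rewrite <- (scal_sum f (N - 1) c). ring. Qed.

Lemma omega_scale Q x y m c : 0 < c -> InOmega Q x y m -> InOmega Q x (y / c) (m / c).
Proof.
  intros Hc [H1 [H2 [H3 H4]]]. unfold InOmega.
  assert (0 < / c) by (apply Rinv_0_lt_compat; lra).
  unfold Rdiv. repeat split; try lra.
  - apply Rmult_lt_0_compat; lra.
  - apply Rmult_le_compat_r; lra.
  - replace (Q * (m * / c)) with ((Q * m) * / c) by ring.
    apply Rmult_le_compat_r; lra.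
Qed.

Theorem mainTheorem3 (d : nat) (Q : R) (B : R -> R -> R -> R) :
  (1 <= d)%nat ->
  1 <= Q ->
  main_ineq_at d Q B 1 ->
  (forall (lambda x y m : R), 0 < lambda -> InOmega Q x y m ->
     B x (lambda * y) (lambda * m) = lambda * B x y m) ->
  forall m : R, 0 < m -> main_ineq_at d Q B m.
Proof.
  intros Hd HQ H1 Hhom m Hm.
  unfold main_ineq_at in *. intros x y xs ys ms Hx Hi Hax Hay [Hmin1 Hmin2].
  set (N := (2 ^ d)%nat) in *.
  assert (HN : (0 < N)%nat) by (unfold N; apply Nat.neq_0_lt_0; apply Nat.pow_nonzero; lia).
  assert (Hx' : InOmega Q x (y / m) 1).
  { pose proof (omega_scale Q x y m m Hm Hx) as H. unfold Rdiv in H.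
    rewrite Rinv_r in H by lra. exact H. }
  specialize (H1 x (y / m) xs (fun i => ys i / m) (fun i => ms i / m) Hx'
                (fun i Hi' => omega_scale Q _ _ _ m Hm (Hi i Hi')) Hax).
  assert (Hay' : avg N (fun i => ys i / m) = y / m).
  { unfold Rdiv. rewrite avg_scal. rewrite Hay. reflexivity. }
  specialize (H1 Hay').
  assert (Hmn : is_min_on N (fun i => ms i / m) 1).
  { split.
    - intros i Hi'. specialize (Hmin1 i Hi').
      apply (Rmult_le_reg_l m); [lra|]. field_simplify; lra.
    - destruct Hmin2 as [i [Hi' Hq]]. exists i. split; auto. rewrite Hq. field. lra. }
  specialize (H1 Hmn).
  assert (E0 : B x y m = m * B x (y / m) 1).
  { rewrite <- (Hhom m x (y / m) 1 Hm Hx'). f_equal; field; lra. }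
  assert (E1 : avg N (fun i => B (xs i) (ys i) (ms i)) =
               avg N (fun i => B (xs i) (ys i / m) (ms i / m)) * m).
  { rewrite <- avg_scal. unfold avg. f_equal. apply sum_eq. intros i Hi'.
    assert (Hi2 : (i < N)%nat) by lia.
    rewrite Rmult_comm.
    rewrite <- (Hhom m _ _ _ Hm (omega_scale Q _ _ _ m Hm (Hi i Hi2))).
    f_equal; field; lra. }
  rewrite E0, E1. apply Rle_ge. apply Rge_le in H1.
  rewrite (Rmult_comm m). apply Rmult_le_compat_r; lra.
Qed.
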